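(* Let $n\ge1$ and let $\mathbf{u}_0,\dots,\mathbf{u}_n$ be linearly independent unit vectors in $\mathbf{C}^{n+1}$, regarded as the vertices $[\mathbf{u}_0],\dots,[\mathbf{u}_n]$ of a projective simplex in $\mathbf{CP}^n$. For each $j=0,\dots,n$ let $d_j$ be the Fubini–Study distance from $[\mathbf{u}_j]$ to the hyperplane $\{[\mathbf{x}]:\mathbf{x}\in\operatorname{span}(\mathbf{u}_i:i\ne j)\setminus\{0\}\}$ containing the opposite face, and let $d_{\min}=\min_j d_j$. Then $$d_{\min}^n\le|\det(\mathbf{u}_0,\dots,\mathbf{u}_n)|.$$ Moreover, if equality holds, then at least $n$ of the $n+1$ distances $d_0,\dots,d_n$ equal $d_{\min}$.
   Context: The dot product on $\mathbf{C}^{n+1}$ is the bilinear form $\mathbf{a}\cdot\mathbf{b}=\sum_i a_ib_i$ (standard basis $\mathbf{e}_0,\dots,\mathbf{e}_n$), and $|\mathbf{a}|^2=\mathbf{a}\cdot\overline{\mathbf{a}}$. On $\Lambda^k\mathbf{C}^{n+1}$ the basis $\mathbf{e}_{i_1}\wedge\dots\wedge\mathbf{e}_{i_k}$ ($i_1<\dots<i_k$) is declared orthonormal, giving a norm $|\omega|^2=\omega\cdot\overline\omega$. $\mathbf{CP}^n$ is the set of classes $[\mathbf{v}]$ of nonzero vectors of $\mathbf{C}^{n+1}$ modulo nonzero scalars. The Fubini–Study distance between points represented by unit vectors $\mathbf{v},\mathbf{w}$ is $|\mathbf{v}\wedge\mathbf{w}|$; the distance from a point $[\mathbf{u}]$ ($|\mathbf{u}|=1$)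 to a hyperplane $H$ is the minimum of $|\mathbf{u}\wedge\mathbf{x}|$ over unit vectors $\mathbf{x}$ with $[\mathbf{x}]\in H$. $\det(\mathbf{u}_0,\dots,\mathbf{u}_n)$ is the determinant of the matrix with these rows. *)

(* Defs.v *)
From HB Require Import structures.
From mathcomp Require Import all_boot all_order all_algebra.
Set Implicit Arguments. Unset Strict Implicit. Unset Printing Implicit Defensive.
Import Order.TTheory GRing.Theory Num.Theory.
Local Open Scope ring_scope.

(* Vectors of C^(m) are row vectors 'rV[C]_m; C is any numClosedFieldType
   (a complexified real closed field). *)

Definition hnorm2 (C : numClosedFieldType) (m : nat) (a : 'rV[C]_m) : C :=
  \sum_(i < m) a 0 i * (a 0 i)^*.

Definition unitv (C : numClosedFieldType) (m : nat) (a : 'rV[C]_m) : Prop :=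
  hnorm2 a = 1.

(* |v /\ w|^2 in the orthonormal basis e_i /\ e_j (i < j) of Lambda^2 C^m *)
Definition wedge_norm2 (C : numClosedFieldType) (m : nat) (v w : 'rV[C]_m) : C :=
  \sum_(i < m) \sum_(j < m | (i < j)%N)
     (v 0 i * w 0 j - v 0 j * w 0 i) * (v 0 i * w 0 j - v 0 j * w 0 i)^*.

(* Fubini--Study distance between points represented by unit vectors *)
Definition fs_dist (C : numClosedFieldType) (m : nat) (v w : 'rV[C]_m) : C :=
  sqrtC (wedge_norm2 v w).

Definition in_face (C : numClosedFieldType) (m : nat)
    (u : 'I_m -> 'rV[C]_m) (j : 'I_m) (x : 'rV[C]_m) : Prop :=
  exists c : 'I_m -> C, c j = 0 /\ x = \sum_(i < m) c i *: u i.

Definition is_face_dist (C : numClosedFieldType) (m : nat)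
    (u : 'I_m -> 'rV[C]_m) (j : 'I_m) (d : C) : Prop :=
  (exists x, unitv x /\ in_face u j x /\ fs_dist (u j) x = d) /\
  (forall x, unitv x -> in_face u j x -> d <= fs_dist (u j) x).

Definition rowsmx (C : numClosedFieldType) (m : nat) (u : 'I_m -> 'rV[C]_m)
  : 'M[C]_m := \matrix_(i < m, k < m) u i 0 k.

(* Main.v *)
Require Import Defs.
From HB Require Import structures.
From mathcomp Require Import all_boot all_order all_algebra.
From mathcomp Require Import spectral ring zify.
Import Order.TTheory GRing.Theory Num.Theory Num.Def.
Local Open Scope ring_scope.
Set Implicit Arguments. Unset Strict Implicit. Unset Printing Implicit Defensive.

Section Aux.
Variable C : numClosedFieldType.

Definition dt m (v w : 'rV[C]_m) : C := \sum_(k < m) v 0 k * (w 0 k)^*.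

Lemma hnorm2_dt m (v : 'rV[C]_m) : hnorm2 v = dt v v.
Proof. by []. Qed.

Lemma dt_conj m (v w : 'rV[C]_m) : (dt v w)^* = dt w v.
Proof.
rewrite /dt rmorph_sum; apply: eq_bigr => k _.
by rewrite rmorphM /= conjCK mulrC.
Qed.

Lemma dt_ge0 m (v : 'rV[C]_m) : 0 <= dt v v.
Proof. by apply: sumr_ge0 => k _; apply: mul_conjC_ge0. Qed.

Lemma lagrange m (v w : 'rV[C]_m) :
  wedge_norm2 v w = dt v v * dt w w - dt v w * dt w v.
Proof.
pose f (i j : 'I_m) := (v 0 i * w 0 j - v 0 j * w 0 i) * (v 0 i * w 0 j - v 0 j * w 0 i)^*.
have fsym i j : f i j = f j i.
  by rewrite /f -opprB rmorphN mulrNN.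
have fii i : f i i = 0 by rewrite /f subrr mul0r.
have split2 : \sum_(i < m) \sum_(j < m) f i j = wedge_norm2 v w + wedge_norm2 v w.
  have -> : wedge_norm2 v w = \sum_(i < m) \sum_(j < m) (if (i < j)%N then f i j else 0).
    by apply: eq_bigr => i _; rewrite big_mkcond.
  have e2 : \sum_(i < m) \sum_(j < m) (if (i < j)%N then f i j else 0) =
            \sum_(i < m) \sum_(j < m) (if (j < i)%N then f i j else 0).
    rewrite exchange_big /=; apply: eq_bigr => i _; apply: eq_bigr => j _.
    by rewrite fsym.
  rewrite [X in _ = _ + X]e2 -big_split /=; apply: eq_bigr => i _.
  rewrite -big_split /=; apply: eq_bigr => j _.
  case: (ltngtP i j) => hij; rewrite ?addr0 ?add0r //.
  have -> : i = j by apply: val_inj.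
  by rewrite fii.
have expand : \sum_(i < m) \sum_(j < m) f i j =
   (dt v v * dt w w - dt v w * dt w v) + (dt v v * dt w w - dt v w * dt w v).
  pose g1 (i j : 'I_m) := v 0 i * (v 0 i)^* * (w 0 j * (w 0 j)^*).
  pose g2 (i j : 'I_m) := v 0 i * (w 0 i)^* * (w 0 j * (v 0 j)^*).
  have -> : \sum_(i < m) \sum_(j < m) f i j = \sum_(i < m) \sum_(j < m) ((g1 i j - g2 i j) + (g1 j i - g2 j i)).
    apply: eq_bigr => i _; apply: eq_bigr => j _.
    rewrite /f /g1 /g2 rmorphB !rmorphM /=; ring.
  have h1 : \sum_(i < m) \sum_(j < m) (g1 i j - g2 i j) = dt v v * dt w w - dt v w * dt w v.
    rewrite /dt !mulr_suml -sumrB; apply: eq_bigr => i _.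
    rewrite !mulr_sumr -sumrB; apply: eq_bigr => j _; by [].
  have h2 : \sum_(i < m) \sum_(j < m) (g1 j i - g2 j i) = dt v v * dt w w - dt v w * dt w v.
    by rewrite exchange_big /=.
  rewrite -{1}h1 -h2 -big_split /=.
  by apply: eq_bigr => i _; rewrite -big_split.
have two : (2 : C) != 0 by rewrite pnatr_eq0.
move: split2; rewrite expand => e.
have h (x : C) : x + x = x * 2 by ring.
by rewrite !h in e; move/(mulIf two): e.
Qed.

Lemma dt_mx m (v w : 'rV[C]_m) : dt v w = (v *m map_mx conjC w^T) 0 0.
Proof. by rewrite /dt !mxE; apply: eq_bigr => k _; rewrite !mxE. Qed.

Lemma dt_mxE m (v w : 'rV[C]_m) : v *m map_mx conjC w^T = (dt v w)%:M.
Proof.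
by apply/matrixP => a b; rewrite !ord1 dt_mx !mxE eqxx mulr1n.
Qed.

Lemma dt_unitary m N (B : 'M[C]_(m, N)) (y z : 'rV[C]_m) :
  B *m map_mx conjC B^T = 1%:M -> dt (y *m B) (z *m B) = dt y z.
Proof.
move=> hB; rewrite !dt_mx trmx_mul map_mxM mulmxA -[y *m B *m _]mulmxA hB.
by rewrite mulmx1.
Qed.

Lemma dt_sum_orth m N (P : pred 'I_m) (S : 'I_m -> 'rV[C]_N) v z :
  (v <= \sum_(k | P k) <<S k>>)%MS -> (forall k, P k -> dt (S k) z = 0) ->
  dt v z = 0.
Proof.
move=> /sub_sumsmxP [w ->] hS.
rewrite dt_mx mulmx_suml summxE big1 // => k Pk.
have : (<<S k>> <= S k)%MS by rewrite genmxE.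
move=> /submxP [D ->]; rewrite -!mulmxA dt_mxE hS // mul_mx_scalar scale0r.
by rewrite mulmx0 mxE.
Qed.

Lemma dtDl m (a b w : 'rV[C]_m) : dt (a + b) w = dt a w + dt b w.
Proof. by rewrite /dt -big_split; apply: eq_bigr => k _; rewrite mxE mulrDl. Qed.

Lemma dtZl m (c : C) (a w : 'rV[C]_m) : dt (c *: a) w = c * dt a w.
Proof. by rewrite /dt mulr_sumr; apply: eq_bigr => k _; rewrite mxE mulrA. Qed.

Lemma dtZr m (c : C) (a w : 'rV[C]_m) : dt a (c *: w) = c^* * dt a w.
Proof.
by rewrite /dt mulr_sumr; apply: eq_bigr => k _; rewrite mxE rmorphM /=; ring.
Qed.

Section Main.
Variables (n : nat) (u : 'I_n.+1 -> 'rV[C]_n.+1).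
Hypothesis hunit : forall i, unitv (u i).
Hypothesis hind : row_free (rowsmx u).

Let A := rowsmx u.
Let B := schmidt A.
Let R := A *m map_mx conjC B^T.

Lemma rowA i : row i A = u i.
Proof. by apply/rowP => k; rewrite !mxE. Qed.

Lemma BB : B *m map_mx conjC B^T = 1%:M.
Proof. by apply/unitarymxP; apply: schmidt_unitarymx. Qed.

Lemma ARB : A = R *m B.
Proof. by rewrite /R mulmxKtV //; apply: schmidt_unitarymx. Qed.

Lemma u_R i : u i = row i R *m B.
Proof. by rewrite -rowA -row_mul -ARB. Qed.

Lemma dtB k k' : dt (row k B) (row k' B) = (k == k')%:R.
Proof.
rewrite dt_mx; transitivity ((B *m map_mx conjC B^T) k k').
  by rewrite !mxE; apply: eq_bigr => j _; rewrite !mxE.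
by rewrite BB mxE.
Qed.

Lemma R_dt i k : R i k = dt (u i) (row k B).
Proof.
by rewrite dt_mx -rowA /R !mxE; apply: eq_bigr => j _; rewrite !mxE.
Qed.

Lemma Rtrig (i k : 'I_n.+1) : (i < k)%N -> R i k = 0.
Proof.
move=> ik; rewrite R_dt -rowA.
apply: dt_sum_orth (row_schmidt_sub A i) _ => k' /= k'i.
have hk : k' != k by apply: contraTneq k'i => ->; rewrite -ltnNge.
by rewrite dtB (negbTE hk).
Qed.

Lemma Rdiag_ge0 i : 0 <= R i i.
Proof.
have := form1_row_schmidt A i.
by rewrite dotmxE R_dt -rowA dt_mx.
Qed.

Lemma dtR i : dt (row i R) (row i R) = 1.
Proof. by rewrite -(dt_unitary _ _ BB) -!u_R; apply: hunit. Qed.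


Lemma Rtrig_mx : is_trig_mx R.
Proof. by apply/is_trig_mxP => i k; apply: Rtrig. Qed.

Lemma detB_norm : `|\det B| = 1.
Proof.
have h : \det B * (\det B)^* = 1.
  have := congr1 determinant BB.
  by rewrite det_mulmx det_map_mx det_tr det1.
apply/eqP; rewrite -sqrp_eq1 // normCK h //.
Qed.

Lemma detA_norm : `|\det A| = \prod_(i < n.+1) R i i.
Proof.
rewrite {1}ARB det_mulmx normrM detB_norm mulr1 (det_trig Rtrig_mx) normr_prod.
by apply: eq_bigr => i _; rewrite ger0_norm // Rdiag_ge0.
Qed.

Lemma detA_neq0 : \det A != 0.
Proof. by move: hind; rewrite row_free_unit unitmxE unitfE. Qed.

Lemma Rdiag_neq0 k : R k k != 0.
Proof.
have := detA_neq0; rewrite -normr_eq0 detA_norm => hn.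
by apply/negP => hk; move: hn; rewrite (bigD1 k) //= (eqP hk) mul0r eqxx.
Qed.

Lemma dt_row_tri (i : 'I_n.+1) : dt (row i R) (row i R) =
  \sum_(k < n.+1 | (k <= i)%N) R i k * (R i k)^*.
Proof.
rewrite /dt (bigID (fun k : 'I_n.+1 => (k <= i)%N)) /= [X in _ + X]big1 ?addr0.
  by apply: eq_bigr => k _; rewrite mxE.
by move=> k; rewrite -ltnNge mxE => hk; rewrite Rtrig // mul0r.
Qed.

Lemma R00 : R 0 0 = 1.
Proof.
have := dtR 0; rewrite dt_row_tri (big_pred1 0); last first.
  by move=> k; rewrite leqn0.
have := Rdiag_ge0 0; move=> h0.
rewrite (conj_Creal (ger0_real h0)) -expr2 => /eqP; rewrite sqrp_eq1 //.
by move/eqP.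
Qed.

Lemma coef_zero (c : 'rV[C]_n.+1) (i : 'I_n.+1) :
  (forall k : 'I_n.+1, (i <= k)%N -> (c *m R) 0 k = 0) ->
  forall k : 'I_n.+1, (i <= k)%N -> c 0 k = 0.
Proof.
move=> hc.
suff H : forall d (k : 'I_n.+1), (n - k < d)%N -> (i <= k)%N -> c 0 k = 0.
  by move=> k; apply: (H n.+1); rewrite ltnS leq_subr.
elim=> [//|d IH] k hd ik.
have := hc k ik; rewrite mxE (bigD1 k) //= big1 ?addr0.
  by move/eqP; rewrite mulf_eq0 (negbTE (Rdiag_neq0 k)) orbF => /eqP.
move=> j jk; case: (ltngtP j k) => hjk.
- by rewrite Rtrig // mulr0.
- rewrite (IH j) ?mul0r //; last by apply: leq_trans ik (ltnW hjk).
  have := ltn_ord j; have := ltn_ord k; lia.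
- by case/eqP: jk; apply: val_inj.
Qed.


Lemma dt_gt0 m (v : 'rV[C]_m) : v != 0 -> 0 < dt v v.
Proof. by move=> hv; rewrite dt_mx -dotmxE; apply: dotmx_is_dotmx. Qed.

Lemma Rii_real i : (R i i)^* = R i i.
Proof. exact/conj_Creal/ger0_real/Rdiag_ge0. Qed.

Lemma in_face_of (i : 'I_n.+1) (xi : 'rV[C]_n.+1) :
  (forall k : 'I_n.+1, (i <= k)%N -> xi 0 k = 0) -> in_face u i (xi *m B).
Proof.
move=> hxi; set x := xi *m B; set cc := x *m invmx A.
have Aunit : A \in unitmx by rewrite -row_free_unit.
have xA : x = cc *m A by rewrite /cc mulmxKV.
have ccR : cc *m R = xi.
  by rewrite /R mulmxA -xA /x mulmxtVK //; apply: schmidt_unitarymx.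
rewrite /in_face; exists (cc 0); split.
  by apply: (coef_zero _ (leqnn i)) => k ik; rewrite ccR hxi.
by rewrite {1}xA mulmx_sum_row; apply: eq_bigr => k _; rewrite rowA.
Qed.

Lemma exists_x (i : 'I_n.+1) : (0 < i)%N ->
  exists x, unitv x /\ in_face u i x /\ fs_dist (u i) x = R i i.
Proof.
move=> i0.
pose r := row i R.
pose p := \row_(k < n.+1) (if (k < i)%N then R i k else 0).
have hpp : dt p p + R i i ^+ 2 = 1.
  rewrite -(dtR i) dt_row_tri (bigD1 i) //= addrC Rii_real -expr2; congr (_ + _).
  rewrite /dt (bigID (fun k : 'I_n.+1 => (k < i)%N)) /= [X in _ + X]big1 ?addr0.
    rewrite [RHS](eq_bigl (fun k : 'I_n.+1 => (k < i)%N)) => [|k]; last first.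
      by rewrite ltn_neqAle andbC.
    by apply: eq_bigr => k ki; rewrite !mxE ki.
  by move=> k ki; rewrite !mxE (negbTE ki) mul0r.
have key : forall xi : 'rV[C]_n.+1, dt xi xi = 1 ->
    (forall k : 'I_n.+1, (i <= k)%N -> xi 0 k = 0) ->
    1 - dt p xi * dt xi p = R i i ^+ 2 ->
    exists x, unitv x /\ in_face u i x /\ fs_dist (u i) x = R i i.
  move=> xi h1 h2 h3; exists (xi *m B); split; first by rewrite /unitv hnorm2_dt dt_unitary // BB.
  split; first exact: in_face_of.
  have hrp : dt r xi = dt p xi.
    apply: eq_bigr => k _; rewrite !mxE; case: ltnP => ki //.
    by rewrite h2 // rmorph0 !mulr0.
  rewrite /fs_dist lagrange (u_R i) !dt_unitary ?BB //.
  rewrite -/r dtR h1 mul1r -(dt_conj r xi) hrp dt_conj h3.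
  by rewrite sqrCK // Rdiag_ge0.
have [p0|pn0] := eqVneq p 0.
  pose e0 : 'rV[C]_n.+1 := \row_(k < n.+1) (k == ord0)%:R.
  apply: (key e0).
  - rewrite /dt (bigD1 ord0) //= big1 ?addr0; first by rewrite !mxE eqxx /= ?rmorph1 ?mulr1 ?mul1r.
    by move=> k hk; rewrite !mxE (negbTE hk) mul0r.
  - move=> k ik; rewrite mxE; case: eqP => // ek; move: ik i0; rewrite ek /=; lia.
  - have dt0 : forall w : 'rV[C]_n.+1, dt 0 w = 0.
      by move=> w; rewrite /dt big1 // => k _; rewrite mxE mul0r.
    by rewrite p0 dt0 mul0r subr0 -hpp p0 dt0 add0r.
pose s := sqrtC (dt p p).
have spos : 0 < s by rewrite sqrtC_gt0 dt_gt0.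
have sreal : s^* = s by apply/conj_Creal/ger0_real/ltW.
have ss : s * s = dt p p by rewrite -expr2 sqrtCK.
have sn0 : s != 0 by rewrite gt_eqF.
apply: (key (s^-1 *: p)).
- rewrite dtZl dtZr rmorphV ?unitfE //= sreal -ss; field; exact: sn0.
- by move=> k ik; rewrite !mxE ltnNge ik /= mulr0.
- rewrite dtZr dtZl rmorphV ?unitfE //= sreal -hpp -ss; field; exact: sn0.
Qed.

End Main.
End Aux.

Unset Implicit Arguments.

Lemma wedge_ge0 (C : numClosedFieldType) m (v w : 'rV[C]_m) : 0 <= wedge_norm2 v w.
Proof. by apply: sumr_ge0 => i _; apply: sumr_ge0 => j _; apply: mul_conjC_ge0. Qed.

Theorem mainTheorem8 (C : numClosedFieldType) (n : nat) (hn : (1 <= n)%N)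
    (u : 'I_n.+1 -> 'rV[C]_n.+1)
    (hunit : forall i, unitv (u i))
    (hind : row_free (rowsmx u))
    (d : 'I_n.+1 -> C)
    (hd : forall j, is_face_dist u j (d j))
    (dmin : C)
    (hmin1 : exists j, d j = dmin)
    (hmin2 : forall j, dmin <= d j) :
  dmin ^+ n <= `|\det (rowsmx u)| /\
  (dmin ^+ n = `|\det (rowsmx u)| -> (n <= #|[set j | d j == dmin]|)%N).
Proof.
set R := rowsmx u *m map_mx conjC (schmidt (rowsmx u))^T.
have hdi : forall i : 'I_n.+1, (0 < i)%N -> d i <= R i i.
  move=> i i0; have [x [hx [hf hfs]]] := exists_x hunit hind i0.
  by rewrite -hfs; apply: (hd i).2.
have d_ge0 : forall j, 0 <= d j.
  move=> j; have [[x [_ [_ <-]]] _] := hd j.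
  by rewrite /fs_dist sqrtC_ge0 wedge_ge0.
have dmin_ge0 : 0 <= dmin by have [j <-] := hmin1; apply: d_ge0.
have hdet : `|\det (rowsmx u)| = \prod_(i < n) R (lift ord0 i) (lift ord0 i).
  by rewrite (detA_norm u) big_ord_recl (R00 hunit) mul1r.
have hle : forall i : 'I_n, 0 <= dmin <= R (lift ord0 i) (lift ord0 i).
  move=> i; rewrite dmin_ge0 /=; apply: le_trans (hmin2 _) (hdi _ _).
  by rewrite lift0.
have hpow : dmin ^+ n = \prod_(i < n) dmin by rewrite prodr_const card_ord.
split.
  by rewrite hdet hpow; apply: ler_prod => i _; apply: hle.
move=> heq.
have dpos : 0 < dmin.
  rewrite lt_def dmin_ge0 andbT; apply: contraTneq (detA_neq0 hind) => e.
  by rewrite -normr_eq0 -heq e expr0n eqn0Ngt hn /= mulr0n eqxx.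
have all_eq : forall i : 'I_n, d (lift ord0 i) = dmin.
  move=> i; apply/eqP; rewrite eq_sym; apply/negP => /negP hne.
  have hlt : dmin < R (lift ord0 i) (lift ord0 i).
    apply: lt_le_trans (hdi _ _); last by rewrite lift0.
    by rewrite lt_def eq_sym hne hmin2.
  move: heq; rewrite hpow hdet (bigD1 i) //= [in X in _ = X](bigD1 i) //= => e.
  have P1pos : 0 < \prod_(j < n | j != i) dmin by apply: prodr_gt0.
  have : dmin * \prod_(j < n | j != i) dmin <
         R (lift ord0 i) (lift ord0 i) * \prod_(j < n | j != i) R (lift ord0 j) (lift ord0 j).
    apply: lt_le_trans (_ : R (lift ord0 i) (lift ord0 i) * \prod_(j < n | j != i) dmin <= _).
      by rewrite ltr_pM2r.
    apply: ler_wpM2l; first by apply: le_trans (ltW hlt).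
    by apply: ler_prod => j _; apply: hle.
  by rewrite e ltxx.
have sub : [set~ ord0] \subset [set j | d j == dmin].
  apply/subsetP => j; rewrite !inE eq_sym => /unlift_some [i -> _].
  by rewrite all_eq.
by have := subset_leq_card sub; rewrite cardsC1 card_ord.
Qed.
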